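(* Let $-\infty\le a<b\le\infty$, let $\kappa,\varphi:(a,b)\to\mathbb C$ be measurable with $\kappa\in L^2(a,b)$ and $\mathbb 1_{(a,c)}\varphi\in L^2(a,b)$ for every $c\in(a,b)$. Choose $c_0:=a<c_1<c_2<\dots<b$ with $\|\mathbb 1_{(c_n,b)}\kappa\|^2=2^{-n}\|\kappa\|^2$, $n\in\mathbb N$, and set $J_n=(c_{n-1},c_n)$, $\omega_n=\|\mathbb 1_{J_n}\kappa\|\cdot\|\mathbb 1_{J_n}\varphi\|$. Then \[ \lim_{n\to\infty}\omega_n=0\iff\lim_{t\nearrow b}\|\mathbb 1_{(a,t)}\varphi\|\cdot\|\mathbb 1_{(t,b)}\kappa\|=0 . \]
   Context: Norms are $L^2(a,b)$-norms; $\mathbb 1_E$ is the indicator function of $E$. *)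

(* Defs.v *)
From HB Require Import structures.
From mathcomp Require Import all_boot all_order all_algebra.
From mathcomp Require Import all_classical all_reals all_analysis.
From mathcomp Require complex.
Set Implicit Arguments. Unset Strict Implicit. Unset Printing Implicit Defensive.
Import Order.TTheory GRing.Theory Num.Theory.
Import numFieldNormedType.Exports.
Local Open Scope classical_set_scope.
Local Open Scope ring_scope.

Notation cplx R := (complex.complex R).

Definition eitv {R : realType} (u v : \bar R) : set R :=
  [set x : R | ((u < x%:E) && (x%:E < v))%E].

Definition csq {R : realType} (z : cplx R) : R :=
  (complex.Re z) ^+ 2 + (complex.Im z) ^+ 2.

Definition cmeasurable {R : realType} (D : set R) (f : R -> cplx R) : Prop :=
  measurable_fun D (fun x => complex.Re (f x)) /\
  measurable_fun D (fun x => complex.Im (f x)).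

Definition sqnorm {R : realType} (E : set R) (f : R -> cplx R) : \bar R :=
  (\int[@lebesgue_measure R]_(x in E) (csq (f x))%:E)%E.

(* L^2 norm ||1_E f|| (for E with finite sqnorm) *)
Definition nrm {R : realType} (E : set R) (f : R -> cplx R) : R :=
  Num.sqrt (fine (sqnorm E f)).

Definition lim_left_zero {R : realType} (a b : \bar R) (g : R -> R) : Prop :=
  forall e : R, 0 < e -> exists t0 : R, (t0%:E < b)%E /\
    forall t : R, t0 < t -> (a < t%:E)%E -> (t%:E < b)%E -> `|g t| < e.

(* Main.v *)
Require Import Defs.
From HB Require Import structures.
From mathcomp Require Import all_boot all_order all_algebra.
From mathcomp Require Import all_classical all_reals all_analysis.
From mathcomp Require complex.
From mathcomp Require Import measurable_realfun zify ring lra.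
Import Order.TTheory GRing.Theory Num.Theory.
Import numFieldNormedType.Exports.
Local Open Scope classical_set_scope.
Local Open Scope ring_scope.

Section H.
Variable R : realType.
Implicit Types (u v w : \bar R) (f : R -> cplx R).

Lemma eitv_meas u v : measurable (eitv u v).
Proof.
have -> : eitv u v = EFin @^-1` [set` Interval (BSide false u) (BSide true v)].
  by apply/seteqP; split => x /=; rewrite in_itv.
rewrite -[X in measurable X]setTI.
apply: EFin_measurable => //; exact: emeasurable_itv.
Qed.

Lemma csq_ge0 (z : cplx R) : 0 <= csq z.
Proof. by rewrite /csq addr_ge0 // sqr_ge0. Qed.

Lemma sq_ge0 (E : set R) f : (0 <= sqnorm E f)%E.
Proof. by apply: integral_ge0 => x _; rewrite lee_fin csq_ge0. Qed.

Lemma csq_meas (D : set R) f : cmeasurable D f ->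
  measurable_fun D (fun x => (csq (f x))%:E).
Proof.
move=> [h1 h2]; apply/measurable_EFinP.
by apply: measurable_funD; apply: measurable_funX.
Qed.

Lemma sq_mono (D E F : set R) f : measurable D -> cmeasurable D f ->
  measurable E -> measurable F -> E `<=` F -> F `<=` D ->
  (sqnorm E f <= sqnorm F f)%E.
Proof.
move=> mD mf mE mF EF FD; apply: ge0_subset_integral => //.
  by apply: (measurable_funS mD FD); exact: csq_meas.
by move=> x _; rewrite lee_fin csq_ge0.
Qed.

Lemma sq_split (D : set R) f u (v : R) w : measurable D -> cmeasurable D f ->
  (u < v%:E)%E -> (v%:E < w)%E -> eitv u w `<=` D ->
  sqnorm (eitv u w) f = (sqnorm (eitv u v%:E) f + sqnorm (eitv v%:E w) f)%E.
Proof.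
move=> mD mf uv vw sD.
have e : eitv u w `\ v = eitv u v%:E `|` eitv v%:E w.
  apply/seteqP; split => x; rewrite /eitv /=.
    move=> [/andP[h1 h2] /eqP xv].
    have [xlv|xgv] := ltP x v.
      by left; rewrite h1 lte_fin xlv.
    by right; rewrite h2 andbT lte_fin lt_neqAle xgv eq_sym xv.
  case => /andP[h1 h2]; split.
  - by rewrite h1 (lt_trans h2 vw).
  - by move=> xv; rewrite xv ltxx in h2.
  - by rewrite h2 (lt_trans uv h1).
  - by move=> xv; rewrite xv ltxx in h1.
have mS : measurable (eitv u w `\ v) by apply: measurableD => //; exact: eitv_meas.
rewrite /sqnorm -(@integral_setD1 _ _ v) //; last first.
  by apply: (measurable_funS mD (subset_trans (@subDsetl _ _ _) sD)); exact: csq_meas.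
rewrite e ge0_integral_setU //; try exact: eitv_meas.
- by rewrite -e; by apply: (measurable_funS mD (subset_trans (@subDsetl _ _ _) sD)); exact: csq_meas.
- by move=> x _; rewrite lee_fin csq_ge0.
- apply/disj_setPS => x [/andP[_ h1] /andP[h2 _]].
  by have := lt_trans h1 h2; rewrite ltxx.
Qed.

Lemma eitv_mono u u' w w' : (u' <= u)%E -> (w <= w')%E -> eitv u w `<=` eitv u' w'.
Proof.
move=> h1 h2 x /andP[a1 a2]; apply/andP; split.
  exact: le_lt_trans h1 a1.
exact: lt_le_trans a2 h2.
Qed.

Lemma sq_fin (E : set R) f : (sqnorm E f < +oo)%E ->
  sqnorm E f = (fine (sqnorm E f))%:E.
Proof. by move=> h; rewrite fineK // ge0_fin_numE // sq_ge0. Qed.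

Lemma fmono (D E F : set R) f : measurable D -> cmeasurable D f ->
  measurable E -> measurable F -> E `<=` F -> F `<=` D ->
  (sqnorm F f < +oo)%E ->
  fine (sqnorm E f) <= fine (sqnorm F f).
Proof.
move=> mD mf mE mF EF FD Ff.
have le : (sqnorm E f <= sqnorm F f)%E.
 exact: (@sq_mono D E F f mD mf mE mF EF FD).
apply: fine_le => //; rewrite ge0_fin_numE ?sq_ge0 //.
exact: le_lt_trans le Ff.
Qed.

Lemma fine_ge0' (E : set R) f : 0 <= fine (sqnorm E f).
Proof. exact/fine_ge0/sq_ge0. Qed.
End H.
Arguments eitv_meas {R}.
Arguments sq_fin {R E f}.
Arguments fine_ge0' {R E f}.
Arguments sq_ge0 {R E f}.



Lemma geo_small (R : realType) (x eps : R) : 0 <= x -> 0 < eps ->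
  exists M, forall m, (M <= m)%N -> x * 2 ^- m < eps.
Proof.
move=> x0 e0; exists (Num.Def.trunc (x / eps)) => m hm.
have h1 : x / eps < m.+1%:R by rewrite -truncn_le_nat.
have h2 : (m.+1%:R : R) <= 2 ^+ m.
  by rewrite -natrX ler_nat; exact: ltn_expl.
have p2 : 0 < (2 : R) ^+ m by rewrite exprn_gt0.
rewrite -[X in _ < X](@mulfK _ (2 ^+ m)) ?gt_eqF //.
rewrite ltr_pM2r ?invr_gt0 //.
have : x < eps * m.+1%:R by rewrite mulrC -ltr_pdivrMr.
move=> h; apply: (lt_le_trans h); rewrite ler_pM2l //.
Qed.

Lemma conv (R : realType) (q T : nat -> R) :
  (forall n, 0 <= T n) ->
  (forall eps, 0 < eps -> exists N, forall n, (N <= n)%N -> q n < eps) ->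
  (forall n, T n.+1 = T n / 2 + q n.+1) ->
  forall eps, 0 < eps -> exists N, forall n, (N <= n)%N -> T n < eps.
Proof.
move=> T0 hq hT eps e0.
have [N hN] := hq (eps / 4) ltac:(by rewrite divr_gt0).
have key : forall m, T (N + m)%N <= eps / 2 + T N * 2 ^- m.
  elim=> [|m IH]; first by rewrite addn0 expr0 invr1 mulr1 lerDr divr_ge0 ?ltW.
  rewrite addnS hT.
  have hq1 := hN (N + m).+1 ltac:(by rewrite ltnW // ltnS leq_addr).
  rewrite exprS invfM.
  set y := T N * 2 ^- m in IH *.
  have -> : T N * (2^-1 * 2 ^- m) = y / 2 by rewrite /y mulrCA mulrA [_ * 2^-1]mulrC -mulrA.
  lra.
have [M hM] := @geo_small _ _ _ (T0 N) (ltac:(by rewrite divr_gt0) : 0 < eps / 2).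
exists (N + M)%N => n hn.
rewrite -(subnKC (leq_trans (leq_addr M N) hn)).
apply: (le_lt_trans (key _)).
have := hM (n - N)%N ltac:(by rewrite leq_subRL ?(leq_trans (leq_addr M N) hn) // ).
lra.
Qed.

Theorem lemma3p2 (R : realType) (a b : \bar R) (kappa phi : R -> cplx R)
  (c : nat -> \bar R) :
  (a < b)%E ->
  cmeasurable (eitv a b) kappa ->
  cmeasurable (eitv a b) phi ->
  (sqnorm (eitv a b) kappa < +oo)%E ->
  (forall c' : R, (a < c'%:E)%E -> (c'%:E < b)%E ->
     (sqnorm (eitv a c'%:E) phi < +oo)%E) ->
  c 0%N = a ->
  (forall n, (c n < c n.+1)%E) ->
  (forall n, (c n < b)%E) ->
  (forall n, sqnorm (eitv (c n) b) kappa
             = ((2 ^- n : R)%:E * sqnorm (eitv a b) kappa)%E) ->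
  let omega := fun n : nat =>
    nrm (eitv (c n.-1) (c n)) kappa * nrm (eitv (c n.-1) (c n)) phi in
  (omega @ \oo --> (0 : R)) <->
  lim_left_zero a b
    (fun t : R => nrm (eitv a t%:E) phi * nrm (eitv t%:E b) kappa).
Proof.
move=> ab mk mp Kfin Pfin c0 cinc cb ck omega.
have mD : measurable (eitv a b) := eitv_meas a b.
have cle : forall m n, (m <= n)%N -> (c m <= c n)%E.
  move=> m n /subnK <-; elim: (n - m)%N => [|k IH]; first by rewrite add0n.
  by rewrite addSn (le_trans IH) // ltW.
have cgt : forall n, (a < c n.+1)%E.
  by move=> n; rewrite -c0 (le_lt_trans (cle 0%N n _)).
pose rr n := fine (c n.+1).
have crE : forall n, c n.+1 = (rr n)%:E.
  move=> n; rewrite /rr; move: (cb n.+1) (cgt n).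
  case: (c n.+1) => [r _ _|hh _|_ hh] //.
    by rewrite ltNge leey in hh.
  by rewrite ltNge leNye in hh.
have sub : forall u w, (a <= u)%E -> (w <= b)%E -> eitv u w `<=` eitv a b.
  by move=> u w h1 h2; apply: eitv_mono.
pose K := fine (sqnorm (eitv a b) kappa).
have KE : sqnorm (eitv a b) kappa = K%:E by exact: sq_fin.
have K0 : 0 <= K by exact: fine_ge0'.
have kfin : forall u w, (a <= u)%E -> (w <= b)%E -> (sqnorm (eitv u w) kappa < +oo)%E.
  move=> u w h1 h2; apply: le_lt_trans Kfin.
  apply: (@sq_mono _ (eitv a b) _ _ _ mD mk) => //; try exact: eitv_meas.
  exact: sub.
have Fk : forall m, sqnorm (eitv (c m) b) kappa = (2 ^- m * K)%:E.
  by move=> m; rewrite ck KE.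
have FkJ : forall m, sqnorm (eitv (c m) (c m.+1)) kappa = (2 ^- m.+1 * K)%:E.
  move=> m.
  have := Fk m.
  rewrite {1}crE (@sq_split _ _ _ _ (rr m) _ mD mk); last first.
  - by apply: sub; [rewrite -c0 cle | ].
  - by rewrite -crE.
  - by rewrite -crE.
  rewrite -crE Fk (sq_fin (kfin _ _ _ _)); last 2 first.
  - by rewrite -c0 cle.
  - by rewrite ltW // -crE.
  move=> /eqP; rewrite -EFinD eqe => /eqP h.
  rewrite (sq_fin (kfin _ _ _ _)); last 2 first.
  - by rewrite -c0 cle.
  - by rewrite ltW // -crE.
  congr (_%:E).
  move: h; set x := fine _; rewrite exprS invfM.
  set y := 2 ^- m; move=> h /=.
  have -> : 2^-1 * y * K = (y * K) / 2 by ring.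
  lra.
pose Pt t := fine (sqnorm (eitv a t%:E) phi).
pose kk t := fine (sqnorm (eitv t%:E b) kappa).
pose p m := fine (sqnorm (eitv (c m) (c m.+1)) phi).
have pfinU : forall u (s : R), (a <= u)%E -> (a < s%:E)%E -> (s%:E < b)%E ->
    (sqnorm (eitv u s%:E) phi < +oo)%E.
  move=> u s h1 h2 h3; apply: le_lt_trans (Pfin s h2 h3).
  apply: (@sq_mono _ (eitv a b) _ _ _ mD mp) => //; try exact: eitv_meas.
  - exact: eitv_mono.
  - by apply: sub => //; rewrite ltW.
have pJfin : forall m, (sqnorm (eitv (c m) (c m.+1)) phi < +oo)%E.
  by move=> m; rewrite crE; apply: pfinU; rewrite -?crE // -c0 cle.
have PSrec : forall m, Pt (rr m.+1) = Pt (rr m) + p m.+1.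
  move=> m; rewrite /Pt /p.
  rewrite !crE.
  have J1 : (sqnorm (eitv (rr m)%:E (rr m.+1)%:E) phi < +oo)%E by rewrite -!crE.
  have A1 : (sqnorm (eitv a (rr m)%:E) phi < +oo)%E by apply: pfinU; rewrite // -crE.
  rewrite (@sq_split _ _ _ _ (rr m) _ mD mp); rewrite -?crE //; last first.
    by apply: sub; [|rewrite ltW].
  by rewrite !crE (sq_fin J1) (sq_fin A1) -EFinD.
have PS0 : Pt (rr 0%N) = p 0%N by rewrite /Pt /p -crE c0.
have omE : forall m, omega m.+1 = Num.sqrt (2 ^- m.+1 * K) * Num.sqrt (p m).
  by move=> m; rewrite /omega /nrm /= FkJ.
have kkE : forall m, kk (rr m) = 2 ^- m.+1 * K by move=> m; rewrite /kk -crE Fk.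
have kk_le : forall t m, (c m <= t%:E)%E -> (t%:E < b)%E -> kk t <= 2 ^- m * K.
  move=> t m h1 h2; rewrite /kk.
  have -> : 2 ^- m * K = fine (sqnorm (eitv (c m) b) kappa) by rewrite Fk.
  apply: (@fmono _ (eitv a b) _ _ _ mD mk); try exact: eitv_meas.
  - exact: eitv_mono.
  - by apply: sub; rewrite // -c0 cle.
  - by apply: kfin; rewrite // -c0 cle.
have Pt_le : forall t s, (a < t%:E)%E -> t <= s -> (s%:E < b)%E -> Pt t <= Pt s.
  move=> t s h1 h2 h3; rewrite /Pt.
  apply: (@fmono _ (eitv a b) _ _ _ mD mp); try exact: eitv_meas.
  - by apply: eitv_mono; rewrite // lee_fin.
  - by apply: sub; rewrite // ltW.
  - by apply: Pfin => //; apply: (lt_le_trans h1); rewrite lee_fin.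
have p_le : forall m s, (c m.+1 <= s%:E)%E -> (s%:E < b)%E -> p m <= Pt s.
  move=> m s h1 h2; rewrite /p /Pt.
  apply: (@fmono _ (eitv a b) _ _ _ mD mp); try exact: eitv_meas.
  - by apply: eitv_mono; rewrite // -c0 cle.
  - by apply: sub; rewrite // ltW.
  - by apply: Pfin => //; apply: (lt_le_trans (cgt m)).
have sq2 : forall x : R, 0 <= x -> Num.sqrt x * Num.sqrt x = x.
  by move=> x x0; rewrite -expr2 sqr_sqrtr.
have e2 : forall e : R, 0 < e -> Num.sqrt (e ^+ 2) = e.
  by move=> e e0; rewrite sqrtr_sqr ger0_norm // ltW.
have pge0 : forall m, 0 <= p m by move=> m; exact: fine_ge0'.
have Ptge0 : forall t, 0 <= Pt t by move=> t; exact: fine_ge0'.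
have kkge0 : forall t, 0 <= kk t by move=> t; exact: fine_ge0'.
have p2ge0 : forall m, 0 <= (2 ^- m : R) by move=> m; rewrite invr_ge0 exprn_ge0.
split.
- move=> hom e e0.
  pose q m := 2 ^- m.+1 * K * p m.
  have hq : forall eps, 0 < eps -> exists N, forall n, (N <= n)%N -> q n < eps.
    move=> eps eps0.
    have h2 : (omega \* omega) x @[x --> \oo] --> (0 * 0 : R) by apply: cvgM.
    have [N _ HN] := proj1 (cvgrPdist_lt _ _) h2 eps eps0.
    exists N => n hn.
    have := HN n.+1 ltac:(by rewrite /= (leq_trans hn)).
    rewrite mulr0 sub0r normrN /= omE mulrACA !sq2 ?mulr_ge0 //.
    by move/(le_lt_trans (ler_norm _)).
  pose T m := 2 ^- m.+1 * K * Pt (rr m).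
  have T0 : forall m, 0 <= T m by move=> m; rewrite !mulr_ge0.
  have Trec : forall m, T m.+1 = T m / 2 + q m.+1.
    move=> m; rewrite /T /q PSrec exprS invfM; ring.
  have [N HN] := @conv _ q T T0 hq Trec (e ^+ 2 / 2) ltac:(by rewrite divr_gt0 ?exprn_gt0).
  exists (rr N); split; first by rewrite -crE.
  move=> t tN hat tb.
  rewrite /nrm -/(Pt t) -/(kk t) -sqrtrM // ger0_norm ?sqrtr_ge0 // -(e2 e e0).
  rewrite ltr_sqrt ?exprn_gt0 //.
  case: (pselect (exists m, (t%:E <= c m)%E)) => [[m hm]|hno].
    have [m0 hm0 hmin] := ex_minnP (ex_intro (fun m => (t%:E <= c m)%E) m hm).
    have h1 : (N.+2 <= m0)%N.
      rewrite ltnNge; apply/negP => h.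
      have := le_trans hm0 (cle _ _ h); rewrite crE lee_fin.
      by move=> /(lt_le_trans tN); rewrite ltxx.
    have [i ei] : exists i, m0 = i.+2 by exists m0.-2; lia.
    rewrite ei in hm0 hmin h1.
    have hi : (c i.+1 < t%:E)%E.
      rewrite ltNge; apply/negP => /hmin; lia.
    have k1 := kk_le t i.+1 (ltW hi) tb.
    have P1 : Pt t <= Pt (rr i.+1).
      apply: Pt_le => //; first by rewrite -lee_fin -crE.
      by rewrite -crE.
    have := HN i.+1 ltac:(lia).
    rewrite /T.
    have := ler_pM (Ptge0 t) (kkge0 t) P1 k1.
    have hh : (2:R) ^- i.+2 = 2^-1 * 2 ^- i.+1 by rewrite exprS invfM.
    move=> hle hlt; rewrite hh in hlt.
    set y := 2 ^- i.+1 in hle hlt *.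
    apply: (le_lt_trans hle).
    have -> : Pt (rr i.+1) * (y * K) = 2 * (2^-1 * y * K * Pt (rr i.+1)) by field.
    lra.
  have hall : forall m, (c m < t%:E)%E.
    move=> m; rewrite ltNge; apply/negP => h; apply: hno; by exists m.
  have [M hM] := @geo_small _ (Pt t * K) (e ^+ 2) (mulr_ge0 (Ptge0 t) K0)
    ltac:(by rewrite exprn_gt0).
  have := hM M (leqnn M).
  apply: le_lt_trans.
  rewrite -mulrA [K * _]mulrC.
  apply: ler_pM => //.
  exact: kk_le (ltW (hall M)) tb.
- move=> hR; apply/cvgrPdist_lt => e e0.
  have [t0 [t0b Ht]] := hR e e0.
  case: (pselect (exists N, (t0%:E < c N)%E)) => [[N hN]|hno].
    exists N.+1 => // n /= hn.
    case: n hn => // m hm.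
    rewrite sub0r normrN ger0_norm; last by rewrite omE mulr_ge0 ?sqrtr_ge0.
    have h1 : t0 < rr m.
      rewrite -lte_fin -crE; apply: (lt_le_trans hN); apply: cle; lia.
    have := Ht (rr m) h1 ltac:(by rewrite -crE) ltac:(by rewrite -crE).
    apply: le_lt_trans; apply: le_trans (ler_norm _).
    rewrite /nrm -/(Pt (rr m)) -/(kk (rr m)) kkE omE mulrC.
    apply: ler_pM; rewrite ?sqrtr_ge0 //.
    by rewrite ler_sqrt //; apply: p_le; rewrite ?crE // -crE.
  have hall : forall N, (c N <= t0%:E)%E.
    move=> j; rewrite leNgt; apply/negP => h; apply: hno; by exists j.
  have at0 : (a < t0%:E)%E := lt_le_trans (cgt 0%N) (hall 1%N).
  have [M hM] := @geo_small _ (K * Pt t0) (e ^+ 2) (mulr_ge0 K0 (Ptge0 t0))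
    ltac:(by rewrite exprn_gt0).
  exists M.+1 => // n /= hn.
  case: n hn => // m hm.
  rewrite sub0r normrN ger0_norm; last by rewrite omE mulr_ge0 ?sqrtr_ge0.
  rewrite omE -sqrtrM ?mulr_ge0 // -(e2 e e0) ltr_sqrt ?exprn_gt0 //.
  apply: le_lt_trans (hM m.+1 ltac:(lia)).
  rewrite [X in _ <= X]mulrC [X in _ <= X]mulrA.
  apply: ler_wpM2l; first by rewrite mulr_ge0.
  exact: p_le (hall m.+1) t0b.
Qed.
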